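(* Let $n$ be a positive integer, $f(x)\mid x^n-1$, and $p(x)\in\mathbb{F}_2[x]$ with $\gcd(p(x),x^n-1)=1$; write $p(x)^{-1}$ for the inverse of $p(x)$ modulo $x^n-1$ and $h(x)=\frac{x^n-1}{f(x)}$. Suppose $r(x),s(x),r'(x),s'(x)\in\mathbb{F}_2[x]$ satisfy $$r(x)+p(x)s(x)\equiv h(x)\pmod{x^n-1},\qquad r'(x)+p(x)^{-1}s'(x)\equiv h(x)\pmod{x^n-1},$$ and let $d$ be the minimum distance of the length-$n$ binary cyclic code generated by $h(x)$. Then the generalized bicycle code defined by $(f(x),p(x)f(x))$ has parameters $[[2n,2\deg(f(x)),d_{GB}]]$ with $$\min\Big\{\frac{(\mathrm{wt}(p)+\mathrm{wt}(p^{-1}))\,d}{m+\mathrm{wt}(p)\,\mathrm{wt}(p^{-1})},\ \frac{d}{m'}\Big\}\ \le\ d_{GB}\ \le\ \min\{\mathrm{wt}(p)+1,\ \mathrm{wt}(p^{-1})+1,\ \mathrm{wt}(s)+\mathrm{wt}(r)\},$$ where $m=\max\{\mathrm{wt}(p),\mathrm{wt}(p^{-1})\}$ and $m'$ may be taken to be either $\max\{\mathrm{wt}(r),\mathrm{wt}(s)\}$ or $\max\{\mathrm{wt}(r'),\mathrm{wt}(s')\}$. Moreover, $C_1\setminus C_2$ contains elements (non-trivial logical operators) of weights $\mathrm{wt}(p)+1$ and $\mathrm{wt}(s)+\mathrm{wt}(r)$.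
   Context: All polynomials are reduced modulo $x^n-1$ (representatives of degree $<n$) before taking weights; $\mathrm{wt}$ is the number of nonzero coefficients. The cyclic code generated by $h(x)$ is the ideal $\langle h(x)\rangle$ of $R_n=\mathbb{F}_2[x]/\langle x^n-1\rangle$, viewed in $\mathbb{F}_2^n$. The generalized bicycle (GB) code defined by $a(x),b(x)\in R_n$ is the CSS code on $2n$ qubits, vectors of $\mathbb{F}_2^{2n}$ being pairs $(u(x),v(x))$, with X-stabilizer space $C_2=\{(ca,cb):c\in R_n\}$, $C_1=\{(u,v):u b+v a=0\text{ in }R_n\}$, Z-stabilizer space $C_2'=\{(c\,b(x^{-1}),c\,a(x^{-1}))\}$ and $C_1'=\{(u,v):u\,a(x^{-1})+v\,b(x^{-1})=0\}$ ($x^{-1}=x^{n-1}$); its dimension is $\dim C_1-\dim C_2$ and its minimum distance $d_{GB}$ is the minimum Hamming weight of an element of $(C_1\setminus C_2)\cup(C_1'\setminus C_2')$. *)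

(* Defs.v *)
From HB Require Import structures.
From mathcomp Require Import all_boot all_order all_algebra.
Set Implicit Arguments. Unset Strict Implicit. Unset Printing Implicit Defensive.
Import GRing.Theory.
Local Open Scope ring_scope.

Definition red (n : nat) (p : {poly 'F_2}) : {poly 'F_2} := p %% ('X^n - 1).

Definition pvec (n : nat) (p : {poly 'F_2}) : 'rV['F_2]_n := poly_rV (red n p).

Definition wt (m : nat) (w : 'rV['F_2]_m) : nat := #|[set i : 'I_m | w 0 i != 0]|.

Definition wtp (n : nat) (p : {poly 'F_2}) : nat := #|[set i : 'I_n | (red n p)`_i != 0]|.

(* a(x^{-1}) in R_n, with x^{-1} = x^{n-1} *)
Definition recip (n : nat) (a : {poly 'F_2}) : {poly 'F_2} :=
  red n (\sum_(i < n) (red n a)`_i *: 'X^((n - i) %% n)).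

Definition cyclic_code (n : nat) (h : {poly 'F_2}) : {set 'rV['F_2]_n} :=
  [set pvec n (rVpoly c * h) | c : 'rV['F_2]_n].

(* X-stabilizer space C_2 and its "commutant" C_1 of the GB code (a,b) *)
Definition GB_C2 (n : nat) (a b : {poly 'F_2}) : {set 'rV['F_2]_(n + n)} :=
  [set row_mx (pvec n (rVpoly c * a)) (pvec n (rVpoly c * b)) | c : 'rV['F_2]_n].
Definition GB_C1 (n : nat) (a b : {poly 'F_2}) : {set 'rV['F_2]_(n + n)} :=
  [set w : 'rV['F_2]_(n + n) |
     red n (rVpoly (lsubmx w) * b + rVpoly (rsubmx w) * a) == 0].
(* Z-stabilizer space C_2' and C_1' *)
Definition GB_C2' (n : nat) (a b : {poly 'F_2}) : {set 'rV['F_2]_(n + n)} :=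
  [set row_mx (pvec n (rVpoly c * recip n b)) (pvec n (rVpoly c * recip n a))
  | c : 'rV['F_2]_n].
Definition GB_C1' (n : nat) (a b : {poly 'F_2}) : {set 'rV['F_2]_(n + n)} :=
  [set w : 'rV['F_2]_(n + n) |
     red n (rVpoly (lsubmx w) * recip n a + rVpoly (rsubmx w) * recip n b) == 0].

Definition dimF (m : nat) (C : {set 'rV['F_2]_m}) : nat := \dim <<enum C>>%VS.

(* minimum weight of a set of vectors (m.+1 if the set is empty) *)
Definition minwt (m : nat) (S : {set 'rV['F_2]_m}) : nat :=
  \big[minn/m.+1]_(w in S) wt w.

Definition mindist (m : nat) (C : {set 'rV['F_2]_m}) : nat := minwt (C :\ 0).

Definition GB_dim (n : nat) (a b : {poly 'F_2}) : nat :=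
  (dimF (GB_C1 n a b) - dimF (GB_C2 n a b))%N.
Definition GB_dist (n : nat) (a b : {poly 'F_2}) : nat :=
  minwt ((GB_C1 n a b :\: GB_C2 n a b) :|: (GB_C1' n a b :\: GB_C2' n a b)).

(* Main.v *)
Require Import Defs.
From HB Require Import structures.
From mathcomp Require Import all_boot all_order all_algebra.
From mathcomp Require Import zify ring.
Unset Printing Implicit Defensive.
Import GRing.Theory Num.Theory Order.TTheory.
Local Open Scope ring_scope.

Lemma char2P : 2 \in [pchar {poly 'F_2}].
Proof. by rewrite pchar_poly pchar_Fp. Qed.
Lemma addpp (q : {poly 'F_2}) : q + q = 0. Proof. exact: (addrr_pchar2 char2P). Qed.
Lemma oppp (q : {poly 'F_2}) : - q = q. Proof. exact: (oppr_pchar2 char2P). Qed.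

Lemma sum_neq0_ex (R : nmodType) (I : finType) (P : pred I) (F : I -> R) :
  \sum_(i | P i) F i != 0 -> exists2 i, P i & F i != 0.
Proof.
move=> H; case: (boolP [exists i, P i && (F i != 0)]).
  by move=> /existsP [i /andP [Pi Fi]]; exists i.
move=> /existsPn H'; move: H; rewrite big1 ?eqxx // => i Pi.
by have := H' i; rewrite Pi /= negbK => /eqP.
Qed.

Lemma Xn1_neq0 n : (0 < n)%N -> ('X^n - 1 : {poly 'F_2}) != 0.
Proof. by move=> n0; rewrite -size_poly_eq0 size_XnsubC. Qed.

Lemma redD n (a b : {poly 'F_2}) : red n (a + b) = red n a + red n b.
Proof. exact: modpD. Qed.
Lemma redZ n c (a : {poly 'F_2}) : red n (c *: a) = c *: red n a.
Proof. exact: modpZl. Qed.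
Lemma red0 n : red n 0 = 0.
Proof. exact: mod0p. Qed.
Lemma red_red n (a : {poly 'F_2}) : red n (red n a) = red n a.
Proof. exact: modp_id. Qed.
Lemma redMr n (a b : {poly 'F_2}) : red n (a * red n b) = red n (a * b).
Proof. exact: modp_mul. Qed.
Lemma redMl n (a b : {poly 'F_2}) : red n (red n a * b) = red n (a * b).
Proof. by rewrite mulrC redMr mulrC. Qed.
Lemma redMM n (a b : {poly 'F_2}) : red n (red n a * red n b) = red n (a * b).
Proof. by rewrite redMl redMr. Qed.
Lemma red_small n (q : {poly 'F_2}) : (0 < n)%N -> (size q <= n)%N -> red n q = q.
Proof. by move=> n0 sq; apply: modp_small; rewrite size_XnsubC. Qed.
Lemma size_red n (q : {poly 'F_2}) : (0 < n)%N -> (size (red n q) <= n)%N.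
Proof. by move=> n0; have := ltn_modp q ('X^n - 1); rewrite size_XnsubC // Xn1_neq0. Qed.
Lemma red_eq0 n (q : {poly 'F_2}) : (red n q == 0) = ('X^n - 1 %| q).
Proof. by apply/eqP/modp_eq0P. Qed.
Lemma red1 n : (0 < n)%N -> red n 1 = 1.
Proof. by move=> n0; rewrite red_small // size_poly1. Qed.
Lemma red_sum n (I : Type) (r : seq I) (F : I -> {poly 'F_2}) :
  red n (\sum_(i <- r) F i) = \sum_(i <- r) red n (F i).
Proof. exact: (big_morph (red n) (@redD n) (red0 n)). Qed.

Lemma redXn1 n (q : {poly 'F_2}) : red n ('X^n * q) = red n q.
Proof.
have -> : ('X^n : {poly 'F_2}) = ('X^n - 1) + 1 by rewrite subrK.
rewrite mulrDl mul1r redD.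
have -> : red n (('X^n - 1) * q) = 0 by apply/eqP; rewrite red_eq0 dvdp_mulr.
by rewrite add0r.
Qed.

Lemma redXnk n k (q : {poly 'F_2}) : red n ('X^n ^+ k * q) = red n q.
Proof.
elim: k q => [|k IH] q; first by rewrite expr0 mul1r.
by rewrite exprS -mulrA redXn1 IH.
Qed.

Lemma redXn n j : (0 < n)%N -> red n 'X^j = 'X^(j %% n).
Proof.
move=> n0; rewrite {1}(divn_eq j n) exprD mulnC exprM.
by rewrite redXnk red_small // size_polyXn ltn_pmod.
Qed.

Lemma red_expand n (q : {poly 'F_2}) : (0 < n)%N ->
  red n q = \sum_(j < size q) q`_j *: 'X^(j %% n).
Proof.
move=> n0; rewrite -{1}(coefK q) poly_def red_sum.
by apply: eq_bigr => j _; rewrite redZ redXn.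
Qed.

Lemma red_supp n (q : {poly 'F_2}) k : (0 < n)%N -> (red n q)`_k != 0 ->
  exists2 j : nat, q`_j != 0 & (j %% n)%N = k.
Proof.
move=> n0; rewrite (red_expand n q n0) coef_sum => /sum_neq0_ex [j _].
rewrite coefZ coefXn; case: (k =P (j %% n)%N) => [->|]; last by rewrite mulr0 eqxx.
by rewrite mulr1 => H; exists j.
Qed.

Definition supp n q := [set i : 'I_n | (red n q)`_i != 0].
Lemma wtpE n (q : {poly 'F_2}) : wtp n q = #|supp n q|. Proof. by []. Qed.

Lemma wtp_red n (q : {poly 'F_2}) : wtp n (red n q) = wtp n q.
Proof. by rewrite /wtp red_red. Qed.

Lemma wtp_eq n (a b : {poly 'F_2}) : red n a = red n b -> wtp n a = wtp n b.
Proof. by rewrite /wtp => ->. Qed.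

Lemma wtpD n (a b : {poly 'F_2}) : (wtp n (a + b) <= wtp n a + wtp n b)%N.
Proof.
rewrite !wtpE; apply: (leq_trans _ (leq_card_setU _ _).1).
apply: subset_leq_card; apply/subsetP => i; rewrite !inE redD coefD.
case: ((red n a)`_i =P 0) => [->|/eqP H _]; first by rewrite add0r => ->; rewrite orbT.
by [].
Qed.

Lemma wtpM n (a b : {poly 'F_2}) : (0 < n)%N -> (wtp n (a * b) <= wtp n a * wtp n b)%N.
Proof.
move=> n0; rewrite !wtpE -cardsX.
pose g (x : 'I_n * 'I_n) : 'I_n := Ordinal (ltn_pmod (x.1 + x.2) n0).
apply: leq_trans (leq_imset_card g _); apply: subset_leq_card.
apply/subsetP => k; rewrite inE -redMM => /(red_supp _ _ _ n0) [j].
rewrite coefM => /sum_neq0_ex [i _] /= Hij Hk.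
have Ha : (red n a)`_i != 0 by apply: contraNneq Hij => ->; rewrite mul0r.
have Hb : (red n b)`_(j - i) != 0 by apply: contraNneq Hij => ->; rewrite mulr0.
have ia : (i < n)%N.
  by apply: leq_trans (size_red n a n0); rewrite ltnNge; apply: contra Ha => H; rewrite nth_default.
have ib : (j - i < n)%N.
  by apply: leq_trans (size_red n b n0); rewrite ltnNge; apply: contra Hb => H; rewrite nth_default.
apply/imsetP; exists (Ordinal ia, Ordinal ib); first by rewrite !inE /= Ha Hb.
apply: val_inj => /=; rewrite subnKC //; by rewrite -ltnS.
Qed.

Lemma wtp_le n (q : {poly 'F_2}) : (wtp n q <= n)%N.
Proof. by rewrite wtpE; apply: leq_trans (max_card _) _; rewrite card_ord. Qed.

Lemma wt_pvec n (q : {poly 'F_2}) : wt (pvec n q) = wtp n q.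
Proof. by rewrite /wt /wtp; apply: eq_card => i; rewrite !inE mxE. Qed.

Lemma size_rVpoly n (v : 'rV['F_2]_n) : (size (rVpoly v) <= n)%N.
Proof. exact: size_poly. Qed.

Lemma red_rVpoly n (v : 'rV['F_2]_n) : (0 < n)%N -> red n (rVpoly v) = rVpoly v.
Proof. by move=> n0; rewrite red_small // size_rVpoly. Qed.

Lemma wtp_rVpoly n (v : 'rV['F_2]_n) : (0 < n)%N -> wtp n (rVpoly v) = wt v.
Proof.
move=> n0; rewrite /wtp /wt red_rVpoly //; apply: eq_card => i.
by rewrite !inE coef_rVpoly_ord.
Qed.

Lemma wt_sum m (w : 'rV['F_2]_m) : wt w = (\sum_(i < m) nat_of_bool (w ord0 i != 0%R))%N.
Proof. by rewrite /wt -sum1_card big_mkcond /=; apply: eq_bigr => i _; rewrite inE; case: ifP. Qed.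

Lemma wt_row_mx n (x y : 'rV['F_2]_n) : wt (row_mx x y) = (wt x + wt y)%N.
Proof.
rewrite !wt_sum big_split_ord /=; congr (_ + _)%N; apply: eq_bigr => i _.
  by rewrite row_mxEl. by rewrite row_mxEr.
Qed.

Lemma pvec_red n (q : {poly 'F_2}) : pvec n (red n q) = pvec n q.
Proof. by rewrite /pvec red_red. Qed.

Lemma rVpoly_pvec n (q : {poly 'F_2}) : (0 < n)%N -> rVpoly (pvec n q) = red n q.
Proof. by move=> n0; rewrite poly_rV_K // size_red. Qed.

Lemma pvec_rVpoly n (v : 'rV['F_2]_n) : (0 < n)%N -> pvec n (rVpoly v) = v.
Proof. by move=> n0; rewrite /pvec red_rVpoly // rVpolyK. Qed.

Lemma pvec_eq0 n (q : {poly 'F_2}) : (0 < n)%N -> (pvec n q == 0) = (red n q == 0).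
Proof.
move=> n0; apply/eqP/eqP => [H|H]; last by rewrite /pvec H linear0.
by rewrite -rVpoly_pvec // H linear0.
Qed.
Lemma recip_red n (a : {poly 'F_2}) : recip n (red n a) = recip n a.
Proof. by rewrite /recip red_red. Qed.
Lemma red_recip n (a : {poly 'F_2}) : red n (recip n a) = recip n a.
Proof. by rewrite /recip red_red. Qed.
Lemma recipD n (a b : {poly 'F_2}) : recip n (a + b) = recip n a + recip n b.
Proof.
rewrite /recip -redD -big_split /= redD; congr (red n _); apply: eq_bigr => i _.
by rewrite coefD scalerDl.
Qed.
Lemma recipZ n c (a : {poly 'F_2}) : recip n (c *: a) = c *: recip n a.
Proof.
rewrite /recip -redZ scaler_sumr redZ; congr (red n _); apply: eq_bigr => i _.
by rewrite coefZ scalerA.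
Qed.
Lemma recip0 n : recip n 0 = 0.
Proof. by rewrite /recip red0 big1 ?red0 // => i _; rewrite coef0 scale0r. Qed.

Definition islin (L : {poly 'F_2} -> {poly 'F_2}) :=
  (forall a b, L (a + b) = L a + L b) /\ (forall c a, L (c *: a) = c *: L a).

Lemma lin_ext L1 L2 : islin L1 -> islin L2 -> (forall j, L1 'X^j = L2 'X^j) ->
  forall a, L1 a = L2 a.
Proof.
move=> [D1 Z1] [D2 Z2] HX a; rewrite -(coefK a) poly_def.
elim/big_rec: _ => [|j s _ IH].
  by rewrite -(scale0r 0) Z1 Z2 !scale0r.
by rewrite D1 D2 Z1 Z2 HX IH.
Qed.

Lemma islin_red n : islin (red n).
Proof. by split; [exact: redD | exact: redZ]. Qed.
Lemma islin_recip n : islin (recip n).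
Proof. by split; [exact: recipD | exact: recipZ]. Qed.

Lemma recipXn n j : (0 < n)%N -> recip n 'X^j = 'X^((n - j %% n) %% n).
Proof.
move=> n0; rewrite /recip redXn //.
have jn : (j %% n < n)%N by rewrite ltn_pmod.
rewrite (bigD1 (Ordinal jn)) //= coefXn eqxx scale1r big1 ?addr0.
  by rewrite redXn // modn_mod.
by move=> i /eqP Hi; rewrite coefXn; case: eqP => // Hij; [case: Hi; apply: val_inj | rewrite scale0r].
Qed.

Lemma recipXM n i j : (0 < n)%N ->
  recip n ('X^i * 'X^j) = red n (recip n 'X^i * recip n 'X^j).
Proof.
move=> n0; rewrite -exprD !recipXn // -exprD redXn //; congr ('X^_).
apply/eqP; rewrite -(eqn_modDr (i + j)).
have E x : ((n - x %% n) + x = 0 %[mod n])%N.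
  rewrite -modnDmr subnK ?modnn ?mod0n //.
  by apply: ltnW; rewrite ltn_pmod.
have E' x : ((n - x %% n) %% n + x = 0 %[mod n])%N by rewrite modnDml E.
by rewrite E addnACA -modnDm !E' !mod0n.
Qed.

Lemma recipM n (a b : {poly 'F_2}) : (0 < n)%N ->
  recip n (a * b) = red n (recip n a * recip n b).
Proof.
move=> n0.
have L2 : forall b, islin (fun a => red n (recip n a * recip n b)).
  move=> b'; split => [x y|c x]; first by rewrite recipD mulrDl redD.
  by rewrite recipZ -scalerAl redZ.
have L1 : forall b, islin (fun a => recip n (a * b)).
  move=> b'; split => [x y|c x]; first by rewrite mulrDl recipD.
  by rewrite -scalerAl recipZ.
suff H : forall i, recip n ('X^i * b) = red n (recip n 'X^i * recip n b).
  exact: (lin_ext _ _ (L1 b) (L2 b) H a).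
move=> i.
have L2' : islin (fun b => red n (recip n 'X^i * recip n b)).
  split => [x y|c x]; first by rewrite recipD mulrDr redD.
  by rewrite recipZ -scalerAr redZ.
have L1' : islin (fun b => recip n ('X^i * b)).
  split => [x y|c x]; first by rewrite mulrDr recipD.
  by rewrite -scalerAr recipZ.
suff H : forall j, recip n ('X^i * 'X^j) = red n (recip n 'X^i * recip n 'X^j).
  exact: (lin_ext _ _ L1' L2' H b).
move=> j; exact: recipXM.
Qed.

Lemma recip_recip n (a : {poly 'F_2}) : (0 < n)%N -> recip n (recip n a) = red n a.
Proof.
move=> n0.
have L1 : islin (fun a => recip n (recip n a)).
  by split => [x y|c x]; rewrite ?recipD ?recipZ.
suff H : forall j, recip n (recip n 'X^j) = red n 'X^j.
  exact: (lin_ext _ _ L1 (islin_red n) H a).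
move=> j.
rewrite !recipXn // redXn //; congr ('X^_).
have E x : ((n - x %% n) + x = 0 %[mod n])%N.
  rewrite -modnDmr subnK ?modnn ?mod0n //.
  by apply: ltnW; rewrite ltn_pmod.
have E' x : ((n - x %% n) %% n + x = 0 %[mod n])%N by rewrite modnDml E.
apply/eqP; rewrite -(eqn_modDr ((n - j %% n) %% n)) E.
by rewrite addnC E'.
Qed.

Lemma recip1 n : (0 < n)%N -> recip n 1 = 1.
Proof. by move=> n0; rewrite -(expr0 'X) recipXn // mod0n subn0 modnn. Qed.

Lemma wtp_recip n (a : {poly 'F_2}) : (0 < n)%N -> (wtp n (recip n a) <= wtp n a)%N.
Proof.
move=> n0; rewrite !wtpE.
pose g (i : 'I_n) : 'I_n := Ordinal (ltn_pmod (n - i) n0).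
apply: leq_trans (leq_imset_card g _); apply: subset_leq_card.
apply/subsetP => k; rewrite inE red_recip {1}/recip => /(red_supp _ _ _ n0) [j].
rewrite coef_sum => /sum_neq0_ex [i _]; rewrite coefZ coefXn.
case: (j =P ((n - i) %% n)%N) => [Hj|_]; last by rewrite mulr0n mulr0 eqxx.
rewrite mulr1 => Hi Hk; apply/imsetP; exists i; first by rewrite inE.
by apply: val_inj => /=; rewrite -Hk Hj modn_mod.
Qed.

Lemma wt_le m (w : 'rV['F_2]_m) : (wt w <= m)%N.
Proof. by rewrite /wt; apply: leq_trans (max_card _) _; rewrite card_ord. Qed.

Lemma minwt_le m (S : {set 'rV['F_2]_m}) w : w \in S -> (minwt S <= wt w)%N.
Proof.
move=> wS; rewrite /minwt.
have : w \in index_enum 'rV['F_2]_m by rewrite mem_index_enum.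
elim: (index_enum _) => // a r IH; rewrite inE big_cons.
case/orP => [/eqP <-|wr]; first by rewrite wS geq_minl.
by case: ifP => _; [apply: leq_trans (geq_minr _ _) (IH wr) | exact: IH].
Qed.

Lemma minwt_attained m (S : {set 'rV['F_2]_m}) w0 : w0 \in S ->
  exists2 w, w \in S & minwt S = wt w.
Proof.
move=> w0S.
have : (minwt S = m.+1) \/ exists2 w, w \in S & minwt S = wt w.
  rewrite /minwt; apply: (big_ind (fun x => (x = m.+1) \/ exists2 w, w \in S & x = wt w)).
  - by left.
  - move=> x y Hx Hy; rewrite /minn; case: ifP => _; [exact: Hx | exact: Hy].
  - by move=> w wS; right; exists w.
case=> // H; have := minwt_le m S w0 w0S; rewrite H => /leq_trans /(_ (wt_le m w0)).
by rewrite ltnn.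
Qed.

Lemma code_dist n (h q g : {poly 'F_2}) : (0 < n)%N -> red n q != 0 ->
  red n q = red n (g * h) -> (mindist (cyclic_code n h) <= wtp n q)%N.
Proof.
move=> n0 q0 Hq; rewrite /mindist -wt_pvec; apply: minwt_le.
rewrite !inE pvec_eq0 // q0 /=; apply/imsetP; exists (pvec n g) => //.
by rewrite rVpoly_pvec // -[RHS]pvec_red redMl -Hq pvec_red.
Qed.

Lemma ann_h n (f w : {poly 'F_2}) : f %| 'X^n - 1 -> f != 0 -> red n (f * w) = 0 ->
  red n w = red n (w %/ (('X^n - 1) %/ f) * (('X^n - 1) %/ f)).
Proof.
move=> fd f0 /eqP; rewrite red_eq0 -{1}(divpK fd) [f * w]mulrC dvdp_mul2r // => hw.
by rewrite divpK.
Qed.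

Lemma pvecD n (a b : {poly 'F_2}) : pvec n (a + b) = pvec n a + pvec n b.
Proof. by rewrite /pvec redD linearD. Qed.
Lemma pvecZ n c (a : {poly 'F_2}) : pvec n (c *: a) = c *: pvec n a.
Proof. by rewrite /pvec redZ linearZ. Qed.

Definition mulM m n (f : {poly 'F_2}) (c : 'rV['F_2]_m) : 'rV['F_2]_n :=
  pvec n (rVpoly c * f).
Lemma mulM_lin m n f : linear (mulM m n f).
Proof.
move=> c x y; rewrite /mulM linearP /= mulrDl pvecD -scalerAl pvecZ.
by [].
Qed.
HB.instance Definition _ m n f :=
  GRing.isLinear.Build 'F_2 'rV['F_2]_m 'rV['F_2]_n *:%R (mulM m n f) (mulM_lin m n f).

Definition PhiF n (a b : {poly 'F_2}) (w : 'rV['F_2]_(n + n)) : 'rV['F_2]_n :=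
  pvec n (rVpoly (lsubmx w) * b + rVpoly (rsubmx w) * a).
Lemma PhiF_lin n a b : linear (PhiF n a b).
Proof.
move=> c x y; rewrite /PhiF.
have -> : lsubmx (c *: x + y) = c *: lsubmx x + lsubmx y by rewrite linearP.
have -> : rsubmx (c *: x + y) = c *: rsubmx x + rsubmx y by rewrite linearP.
rewrite !linearP /= !mulrDl -!scalerAl.
rewrite -pvecZ -pvecD; congr (pvec n _).
by rewrite scalerDr !addrA; congr (_ + _); rewrite addrAC.
Qed.
HB.instance Definition _ n a b :=
  GRing.isLinear.Build 'F_2 'rV['F_2]_(n + n) 'rV['F_2]_n *:%R (PhiF n a b) (PhiF_lin n a b).

Definition PsiF n (a b : {poly 'F_2}) (c : 'rV['F_2]_n) : 'rV['F_2]_(n + n) :=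
  row_mx (pvec n (rVpoly c * a)) (pvec n (rVpoly c * b)).
Lemma PsiF_lin n a b : linear (PsiF n a b).
Proof.
move=> c x y; rewrite /PsiF scale_row_mx add_row_mx.
by rewrite !linearP /= !mulrDl -!scalerAl !pvecD !pvecZ.
Qed.
HB.instance Definition _ n a b :=
  GRing.isLinear.Build 'F_2 'rV['F_2]_n 'rV['F_2]_(n + n) *:%R (PsiF n a b) (PsiF_lin n a b).

Lemma dimF_eq m (C : {set 'rV['F_2]_m}) (U : {vspace 'rV['F_2]_m}) :
  (forall x, (x \in C) = (x \in U)) -> dimF C = \dim U.
Proof.
move=> H; rewrite /dimF; congr (\dim _); apply/eqP; rewrite eqEsubv; apply/andP; split.
  by apply/span_subvP => x; rewrite mem_enum H.
by apply/subvP => x xU; apply: memv_span; rewrite mem_enum H.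
Qed.

Lemma size_h n (f : {poly 'F_2}) : (0 < n)%N -> f %| 'X^n - 1 ->
  addn (size (('X^n - 1) %/ f)) (size f).-1 = n.+1.
Proof.
move=> n0 fd.
have f0 : f != 0 by apply: (contraTneq _ fd) => ->; rewrite dvd0p (negPf (Xn1_neq0 n n0)).
have := divpK fd; set h := _ %/ f => E.
have h0 : h != 0 by apply: (contraTneq _ (Xn1_neq0 n n0)) => h0; rewrite -E h0 mul0r eqxx.
have : size (h * f) = size ('X^n - 1 : {poly 'F_2}) by rewrite E.
rewrite size_mul // size_XnsubC // => <-.
by rewrite -size_poly_gt0 in f0; case: (size f) f0 => // s _; rewrite addnS.
Qed.

Lemma dim_ker_mul n (f : {poly 'F_2}) : (0 < n)%N -> f %| 'X^n - 1 ->
  \dim (lker (linfun (mulM n n f))) = (size f).-1.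
Proof.
move=> n0 fd.
have f0 : f != 0 by apply: (contraTneq _ fd) => ->; rewrite dvd0p (negPf (Xn1_neq0 n n0)).
set k := (size f).-1; set h := ('X^n - 1) %/ f.
have Hs := size_h n f n0 fd; rewrite -/h -/k in Hs.
have h0 : h != 0.
  by apply: (contraTneq _ (Xn1_neq0 n n0)) => h0; rewrite -(divpK fd) -/h h0 mul0r eqxx.
set N := linfun (mulM k n h).
have szgh (g : 'rV['F_2]_k) : (size (rVpoly g * h)%R <= n)%N.
  apply: leq_trans (size_polyMleq _ _) _.
  have := size_rVpoly k g; move: Hs; set b := size h; set a := size (rVpoly g).
  by clearbody a b k; lia.
have kerN : lker N = 0%VS.
  apply/eqP/lker0P => x y; rewrite !lfunE /= /mulM => /(congr1 (@rVpoly _ _)).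
  rewrite !rVpoly_pvec // !red_small // => /(mulIf h0) /(congr1 (@poly_rV _ k)).
  by rewrite !rVpolyK.
have -> : lker (linfun (mulM n n f)) = limg N.
  apply/eqP; rewrite eqEsubv; apply/andP; split; apply/subvP => x.
    rewrite memv_ker lfunE /= /mulM pvec_eq0 // => Hx.
    have hd : h %| rVpoly x.
      move: Hx; rewrite mulrC red_eq0 -{1}(divpK fd) -/h (mulrC f) dvdp_mul2r //.
    set g := rVpoly x %/ h.
    have sg : (size g <= k)%N.
      rewrite size_divp //; have := size_rVpoly n x; rewrite leq_subLR.
      move: Hs; set b := size h; set a := size (rVpoly x).
      by clearbody a b k; lia.
    apply/memv_imgP; exists (poly_rV g : 'rV_k); first exact: memvf.
    rewrite lfunE /= /mulM poly_rV_K // /g divpK // /pvec red_rVpoly //.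
    by rewrite rVpolyK.
  move/memv_imgP => [g _ ->]; rewrite memv_ker !lfunE /= /mulM pvec_eq0 //.
  rewrite rVpoly_pvec // redMl -mulrA /h divpK // red_eq0.
  by apply: dvdp_mull.
rewrite limg_dim_eq; last by rewrite kerN capv0.
by rewrite dimvf /dim /= mul1n.
Qed.

Lemma dim_rV m : \dim {:'rV['F_2]_m} = m.
Proof. by rewrite dimvf /dim /= mul1n. Qed.

Lemma dim_img_ker m n' (L : 'Hom('rV['F_2]_m, 'rV['F_2]_n')) :
  (\dim (lker L) + \dim (limg L) = m)%N.
Proof. by rewrite -[RHS](dim_rV m) -(limg_ker_dim L fullv) capfv. Qed.

Lemma GB_dim_eq n (f p : {poly 'F_2}) : (0 < n)%N -> f %| 'X^n - 1 ->
  GB_dim n f (p * f) = (2 * (size f).-1)%N.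
Proof.
move=> n0 fd.
have f0 : f != 0 by apply: (contraTneq _ fd) => ->; rewrite dvd0p (negPf (Xn1_neq0 n n0)).
have kn : ((size f).-1 <= n)%N.
  have := dvdp_leq (Xn1_neq0 n n0) fd; rewrite size_XnsubC //.
  by set s := size f; clearbody s; lia.
set M := linfun (mulM n n f).
have kM := dim_ker_mul n f n0 fd; rewrite -/M in kM.
have iM := dim_img_ker n n M; rewrite kM in iM.
set Ps := linfun (PsiF n f (p * f)).
set Ph := linfun (PhiF n f (p * f)).
have C2E : dimF (GB_C2 n f (p * f)) = \dim (limg Ps).
  apply: dimF_eq => x; apply/imsetP/memv_imgP => [[c _ ->]|[c _ ->]].
    by exists c; [exact: memvf | rewrite lfunE].
  by exists c => //; rewrite lfunE.
have C1E : dimF (GB_C1 n f (p * f)) = \dim (lker Ph).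
  apply: dimF_eq => x; rewrite inE memv_ker lfunE /= /PhiF pvec_eq0 //.
have kPs : lker Ps = lker M.
  apply/eqP; rewrite eqEsubv; apply/andP; split; apply/subvP => x;
    rewrite !memv_ker !lfunE /= /PsiF /mulM.
    by rewrite -row_mx0 => /eqP /eq_row_mx [-> _].
  rewrite !pvec_eq0 // => /eqP H; rewrite -row_mx0; apply/eqP; congr row_mx.
    by apply/eqP; rewrite pvec_eq0 // H.
  apply/eqP; rewrite pvec_eq0 // mulrA (mulrC _ p) -mulrA -redMr H mulr0 red0.
  by [].
have iPh : limg Ph = limg M.
  apply/eqP; rewrite eqEsubv; apply/andP; split; apply/subvP => x /memv_imgP [w _ ->].
    apply/memv_imgP; exists (pvec n (rVpoly (lsubmx w) * p + rVpoly (rsubmx w))).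
      exact: memvf.
    rewrite !lfunE /= /PhiF /mulM rVpoly_pvec // -[RHS]pvec_red redMl pvec_red.
    by rewrite mulrDl mulrA.
  apply/memv_imgP; exists (row_mx 0 w); first exact: memvf.
  by rewrite !lfunE /= /PhiF /mulM row_mxKl row_mxKr linear0 mul0r add0r.
have dPs := dim_img_ker n (n + n) Ps; rewrite kPs kM in dPs.
have dPh := dim_img_ker (n + n) n Ph; rewrite iPh in dPh.
rewrite /GB_dim C1E C2E.
move: iM dPs dPh kn; set a := \dim (limg M); set b := \dim (limg Ps); set c := \dim (lker Ph).
set k := (size f).-1; clearbody a b c k; lia.
Qed.

Lemma inC1 n (a b u v : {poly 'F_2}) : (0 < n)%N -> red n (u * b + v * a) = 0 ->
  row_mx (pvec n u) (pvec n v) \in GB_C1 n a b.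
Proof.
move=> n0 H; rewrite inE row_mxKl row_mxKr !rVpoly_pvec // redD redMl.
by rewrite (redMl n v) -redD H.
Qed.

Lemma notC2 n (a b u v : {poly 'F_2}) : (0 < n)%N ->
  (forall c, red n (c * a) = red n u -> red n (c * b) = red n v -> False) ->
  row_mx (pvec n u) (pvec n v) \notin GB_C2 n a b.
Proof.
move=> n0 H; apply/imsetP => [[c _ /eq_row_mx [E1 E2]]].
apply: (H (rVpoly c)).
  by rewrite -(rVpoly_pvec n u n0) E1 rVpoly_pvec // red_red.
by rewrite -(rVpoly_pvec n v n0) E2 rVpoly_pvec // red_red.
Qed.

Lemma wt_rowp n (u v : {poly 'F_2}) : wt (row_mx (pvec n u) (pvec n v)) = (wtp n u + wtp n v)%N.
Proof. by rewrite wt_row_mx !wt_pvec. Qed.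

Lemma wtp1 n : (0 < n)%N -> wtp n 1 = 1%N.
Proof.
case: n => // n _; rewrite wtpE /supp red1 //.
rewrite (_ : [set _ | _] = [set ord0]) ?cards1 //.
apply/setP => i; rewrite !inE coef1; case: (i =P ord0) => [->|H] //=.
have -> : (nat_of_ord i == 0%N) = false by apply/negP => /eqP E; apply: H; apply: val_inj.
by rewrite eqxx.
Qed.

Lemma red_ne1 n (f c : {poly 'F_2}) : f %| 'X^n - 1 -> (1 < size f)%N ->
  red n (c * f) = red n 1 -> False.
Proof.
move=> fd sf E.
have : red n (c * f - 1) == 0 by rewrite redD /red modpN -/(red n 1) -/(red n (c * f)) E subrr.
rewrite red_eq0 => /(dvdp_trans fd); rewrite dvdp_subr ?dvdp_mull // dvdp1.
by move=> /eqP E1; rewrite E1 in sf.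
Qed.

Lemma ann_dvd n (a b w : {poly 'F_2}) : a * b = 'X^n - 1 -> a != 0 ->
  red n (a * w) = 0 -> b %| w.
Proof. by move=> E a0 /eqP; rewrite red_eq0 -E dvdp_mul2l. Qed.

Lemma ratA (d x y P Q : nat) : (d <= x * P + y)%N -> (d <= y * Q + x)%N ->
  ((P + Q) * d)%:R / (maxn P Q + P * Q)%:R <= (x + y)%:R :> rat.
Proof.
move=> H1 H2.
have HN : ((P + Q) * d <= (x + y) * (maxn P Q + P * Q))%N.
  have h1 := leq_mul (leqnn Q) H1; have h2 := leq_mul (leqnn P) H2.
  have hm1 : (P <= maxn P Q)%N by rewrite leq_maxl.
  have hm2 : (Q <= maxn P Q)%N by rewrite leq_maxr.
  have h3 := leq_mul (leqnn x) hm1; have h4 := leq_mul (leqnn y) hm2.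
  move: (maxn P Q) h3 h4 => M h3 h4; nia.
case: (posnP (maxn P Q + P * Q)) => [->|pos].
  by rewrite invr0 mulr0 ler0n.
by rewrite ler_pdivrMr ?ltr0n // -natrM ler_nat.
Qed.

Lemma ratB (d x y M : nat) : (d <= (x + y) * M)%N -> d%:R / M%:R <= (x + y)%:R :> rat.
Proof.
move=> H; case: (posnP M) => [->|pos]; first by rewrite invr0 mulr0 ler0n.
by rewrite ler_pdivrMr ?ltr0n // -natrM ler_nat.
Qed.

Lemma congrMr n (a b c : {poly 'F_2}) : red n b = red n c -> red n (a * b) = red n (a * c).
Proof. by move=> H; rewrite -redMr H redMr. Qed.
Lemma congrMl n (a b c : {poly 'F_2}) : red n b = red n c -> red n (b * a) = red n (c * a).
Proof. by move=> H; rewrite -redMl H redMl. Qed.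
Lemma congrDr n (a b c : {poly 'F_2}) : red n b = red n c -> red n (a + b) = red n (a + c).
Proof. by move=> H; rewrite !redD H. Qed.
Lemma congrDl n (a b c : {poly 'F_2}) : red n b = red n c -> red n (b + a) = red n (c + a).
Proof. by move=> H; rewrite !redD H. Qed.

Lemma mix_max x y R S : (x * R + y * S <= (x + y) * maxn R S)%N.
Proof.
rewrite mulnDl leq_add // leq_mul2l ?leq_maxl ?leq_maxr ?orbT //.
Qed.

Lemma red_mul1 n (a q1 q2 : {poly 'F_2}) : red n (q1 * q2) = 1 -> red n (a * q1 * q2) = red n a.
Proof. by move=> H; rewrite -mulrA -redMr H mulr1. Qed.

Lemma X_lower n (f p pinv r s r' s' : {poly 'F_2}) (w : 'rV['F_2]_(n + n)) :
  (0 < n)%N -> f %| 'X^n - 1 -> (1 < size f)%N -> red n (p * pinv) = 1 ->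
  red n (r + p * s) = red n (('X^n - 1) %/ f) ->
  red n (r' + pinv * s') = red n (('X^n - 1) %/ f) ->
  w \in GB_C1 n f (p * f) -> w \notin GB_C2 n f (p * f) ->
  let d := mindist (cyclic_code n (('X^n - 1) %/ f)) in
  let x := wt (lsubmx w) in let y := wt (rsubmx w) in
  ((d <= x * wtp n p + y)%N /\ (d <= y * wtp n pinv + x)%N) \/
  ((d <= (x + y) * maxn (wtp n r) (wtp n s))%N /\
   (d <= (x + y) * maxn (wtp n r') (wtp n s'))%N).
Proof.
move=> n0 fd sf hp hr hr' C1 nC2.
have f0 : f != 0 by apply: (contraTneq _ fd) => ->; rewrite dvd0p (negPf (Xn1_neq0 n n0)).
set h := ('X^n - 1) %/ f in hr hr' *.
move=> d x y.
have E : h * f = 'X^n - 1 by rewrite divpK.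
have h0 : h != 0.
  by apply: (contraTneq _ (Xn1_neq0 n n0)) => h0; rewrite -E h0 mul0r eqxx.
have hpC : red n (pinv * p) = 1 by rewrite mulrC.
set U := rVpoly (lsubmx w); set V := rVpoly (rsubmx w).
have xU : wtp n U = x by rewrite wtp_rVpoly.
have yV : wtp n V = y by rewrite wtp_rVpoly.
have HC : red n (U * (p * f) + V * f) = 0 by move: C1; rewrite inE => /eqP.
set W := U * p + V.
have HW : red n (f * W) = 0 by rewrite -HC /W; congr (red n _); ring.
case: (boolP (red n W == 0)) => HW0.
- right.
  have RV : red n V = red n (U * p).
    have -> : V = W + U * p by rewrite /W addrC addrA addpp add0r.
    by rewrite redD (eqP HW0) add0r.
  have Uh : red n (U * h) != 0.
    apply/negP => /eqP Uh0.
    have fU : f %| U by apply: (ann_dvd n h f U E h0); rewrite mulrC.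
    apply: (negP nC2); rewrite -(hsubmxK w); apply/imsetP.
    exists (pvec n (U %/ f)) => //; rewrite rVpoly_pvec //.
    congr row_mx.
      by rewrite -pvec_red redMl pvec_red divpK // -/U pvec_rVpoly.
    rewrite -pvec_red redMl pvec_red.
    have -> : U %/ f * (p * f) = U %/ f * f * p by ring.
    rewrite divpK // -(pvec_rVpoly n (rsubmx w) n0).
    by rewrite -/V -pvec_red RV pvec_red.
  have Vh : red n (V * h) != 0.
    apply: contraNneq Uh => Vh0.
    rewrite -(red_mul1 n (U * h) p pinv hp).
    have -> : U * h * p * pinv = (U * p) * h * pinv by ring.
    by rewrite -redMl -(congrMl n h _ _ RV) redMl -redMl Vh0 mul0r red0.
  split.
    apply: leq_trans (code_dist n h (U * h) U n0 Uh (erefl _)) _.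
    have -> : wtp n (U * h) = wtp n (U * r + V * s).
      apply: wtp_eq; rewrite -(congrMr n U _ _ hr) mulrDr redD (redD _ (U * r)).
      congr (_ + _); rewrite mulrA -redMl -RV redMl.
      by [].
    apply: leq_trans (wtpD n _ _) _; apply: leq_trans (mix_max x y _ _).
    by apply: leq_add; rewrite -?xU -?yV wtpM.
  apply: leq_trans (code_dist n h (V * h) V n0 Vh (erefl _)) _.
  have -> : wtp n (V * h) = wtp n (V * r' + U * s').
    apply: wtp_eq; rewrite -(congrMr n V _ _ hr') mulrDr redD (redD _ (V * r')).
    congr (_ + _); rewrite mulrA -redMl (congrMl n pinv _ _ RV) redMl.
    by apply: congrMl; rewrite red_mul1.
  apply: leq_trans (wtpD n _ _) _; rewrite [(x + y)%N]addnC; apply: leq_trans _ (mix_max y x _ _).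
  by apply: leq_add; rewrite -?xU -?yV wtpM.
- left.
  have HWq := ann_h n f W fd f0 HW; rewrite -/h in HWq.
  split.
    apply: leq_trans (code_dist n h W _ n0 HW0 HWq) _.
    apply: leq_trans (wtpD n _ _) _; rewrite -xU -yV leq_add2r; exact: wtpM.
  set W2 := W * pinv.
  have HW2 : red n (f * W2) = 0 by rewrite /W2 mulrA -redMl HW mul0r red0.
  have HW20 : red n W2 != 0.
    apply: contraNneq HW0 => H; rewrite -(red_mul1 n W pinv p hpC) -/W2.
    by rewrite -redMl H mul0r red0.
  have HW2q := ann_h n f W2 fd f0 HW2; rewrite -/h in HW2q.
  apply: leq_trans (code_dist n h W2 _ n0 HW20 HW2q) _.
  have -> : wtp n W2 = wtp n (V * pinv + U).
    apply: wtp_eq; rewrite /W2 /W mulrDl redD (redD _ (V * pinv)) addrC.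
    by rewrite red_mul1.
  apply: leq_trans (wtpD n _ _) _; rewrite -xU -yV leq_add2r; exact: wtpM.
Qed.

Lemma recip_nz n (q : {poly 'F_2}) : (0 < n)%N -> red n q != 0 -> red n (recip n q) != 0.
Proof.
move=> n0; apply: contraNneq => H; rewrite -recip_recip // -recip_red H recip0.
by [].
Qed.

Lemma recip_of0 n (q : {poly 'F_2}) : red n q = 0 -> recip n q = 0.
Proof. by move=> H; rewrite -recip_red H recip0. Qed.

Lemma Z_lower n (f p pinv r s r' s' : {poly 'F_2}) (w : 'rV['F_2]_(n + n)) :
  (0 < n)%N -> f %| 'X^n - 1 -> (1 < size f)%N -> red n (p * pinv) = 1 ->
  red n (r + p * s) = red n (('X^n - 1) %/ f) ->
  red n (r' + pinv * s') = red n (('X^n - 1) %/ f) ->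
  w \in GB_C1' n f (p * f) -> w \notin GB_C2' n f (p * f) ->
  let d := mindist (cyclic_code n (('X^n - 1) %/ f)) in
  let x := wt (lsubmx w) in let y := wt (rsubmx w) in
  ((d <= y * wtp n p + x)%N /\ (d <= x * wtp n pinv + y)%N) \/
  ((d <= (x + y) * maxn (wtp n r) (wtp n s))%N /\
   (d <= (x + y) * maxn (wtp n r') (wtp n s'))%N).
Proof.
move=> n0 fd sf hp hr hr' C1 nC2.
have f0 : f != 0 by apply: (contraTneq _ fd) => ->; rewrite dvd0p (negPf (Xn1_neq0 n n0)).
set h := ('X^n - 1) %/ f in hr hr' *.
move=> d x y.
have E : h * f = 'X^n - 1 by rewrite divpK.
have h0 : h != 0.
  by apply: (contraTneq _ (Xn1_neq0 n n0)) => h0; rewrite -E h0 mul0r eqxx.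
set p' := recip n p; set i' := recip n pinv; set fs := recip n f.
have hp' : red n (p' * i') = 1 by rewrite -recipM // -recip_red hp recip1.
have hpC' : red n (i' * p') = 1 by rewrite mulrC.
set U := rVpoly (lsubmx w); set V := rVpoly (rsubmx w).
have xU : wtp n U = x by rewrite wtp_rVpoly.
have yV : wtp n V = y by rewrite wtp_rVpoly.
have HC : red n (U * fs + V * recip n (p * f)) = 0 by move: C1; rewrite inE => /eqP.
set W := U + V * p'.
have HW : red n (fs * W) = 0.
  rewrite -HC redD (congrMr n V _ (p' * fs)); last by rewrite recipM // red_red.
  by rewrite -redD; congr (red n _); rewrite /W; ring.
have HWr : red n (f * recip n W) = 0.
  rewrite -(congrMl n (recip n W) (recip n fs)); last by rewrite recip_recip // red_red.
  by rewrite -recipM // recip_of0.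
have Hpw (q : {poly 'F_2}) : (wtp n (q * p') <= wtp n q * wtp n p)%N.
  by apply: leq_trans (wtpM n _ _ n0) _; rewrite leq_mul2l wtp_recip ?orbT.
have Hiw (q : {poly 'F_2}) : (wtp n (q * i') <= wtp n q * wtp n pinv)%N.
  by apply: leq_trans (wtpM n _ _ n0) _; rewrite leq_mul2l wtp_recip ?orbT.
have Hrw (q a : {poly 'F_2}) : (wtp n (q * recip n a) <= wtp n q * wtp n a)%N.
  by apply: leq_trans (wtpM n _ _ n0) _; rewrite leq_mul2l wtp_recip ?orbT.
case: (boolP (red n W == 0)) => HW0.
- right.
  have RU : red n U = red n (V * p').
    have -> : U = W + V * p' by rewrite /W -addrA addpp addr0.
    by rewrite redD (eqP HW0) add0r.
  set hs := recip n h.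
  have hsE : red n hs = red n (recip n r + p' * recip n s).
    rewrite red_recip /hs -recip_red -hr recip_red recipD recipM // redD red_recip.
    by [].
  have hsE' : red n hs = red n (recip n r' + i' * recip n s').
    rewrite red_recip /hs -recip_red -hr' recip_red recipD recipM // redD red_recip.
    by [].
  have Vh : red n (V * hs) != 0.
    apply/negP => /eqP Vh0.
    have H1 : red n (h * recip n V) = 0.
      rewrite mulrC -(congrMr n (recip n V) (recip n hs)); last by rewrite recip_recip // red_red.
      by rewrite -recipM // recip_of0.
    have fV := ann_dvd n h f (recip n V) E h0 H1.
    set g := recip n V %/ f.
    have RV : red n V = red n (recip n g * fs).
      by rewrite -recip_recip // -/g -(divpK fV) recipM.
    apply: (negP nC2); rewrite -(hsubmxK w); apply/imsetP.
    exists (pvec n (recip n g)) => //; rewrite rVpoly_pvec // red_recip.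
    congr row_mx.
      rewrite -(pvec_rVpoly n (lsubmx w) n0) -/U -pvec_red RU -[RHS]pvec_red.
      rewrite (congrMr n (recip n g) _ (p' * fs)); last by rewrite recipM // red_red.
      by rewrite (congrMl n p' _ _ RV) mulrA mulrAC.
    by rewrite -(pvec_rVpoly n (rsubmx w) n0) -/V -pvec_red RV pvec_red.
  have Uh : red n (U * hs) != 0.
    apply: contraNneq Vh => Uh0.
    rewrite -(red_mul1 n (V * hs) p' i' hp').
    have -> : V * hs * p' * i' = (V * p') * hs * i' by ring.
    by rewrite -redMl -(congrMl n hs _ _ RU) redMl -redMl Uh0 mul0r red0.
  have HVq : red n (recip n (V * hs)) = red n (recip n V * h).
    by rewrite red_recip recipM // (congrMr n (recip n V) _ h) // recip_recip // red_red.
  have HUq : red n (recip n (U * hs)) = red n (recip n U * h).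
    by rewrite red_recip recipM // (congrMr n (recip n U) _ h) // recip_recip // red_red.
  split.
    apply: leq_trans (code_dist n h _ _ n0 (recip_nz n _ n0 Vh) HVq) _.
    apply: leq_trans (wtp_recip n _ n0) _.
    have -> : wtp n (V * hs) = wtp n (V * recip n r + U * recip n s).
      apply: wtp_eq; rewrite (congrMr n V _ _ hsE) mulrDr redD (redD _ (V * recip n r)).
      congr (_ + _); rewrite mulrA.
      by apply: congrMl; rewrite RU.
    apply: leq_trans (wtpD n _ _) _; rewrite [(x + y)%N]addnC.
    apply: leq_trans _ (mix_max y x _ _).
    by apply: leq_add; rewrite -?xU -?yV Hrw.
  apply: leq_trans (code_dist n h _ _ n0 (recip_nz n _ n0 Uh) HUq) _.
  apply: leq_trans (wtp_recip n _ n0) _.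
  have -> : wtp n (U * hs) = wtp n (U * recip n r' + V * recip n s').
    apply: wtp_eq; rewrite (congrMr n U _ _ hsE') mulrDr redD (redD _ (U * recip n r')).
    congr (_ + _); rewrite mulrA; apply: congrMl.
    by rewrite (congrMl n i' _ _ RU) red_mul1.
  apply: leq_trans (wtpD n _ _) _; apply: leq_trans _ (mix_max x y _ _).
  by apply: leq_add; rewrite -?xU -?yV Hrw.
- left.
  have HWq := ann_h n f (recip n W) fd f0 HWr; rewrite -/h in HWq.
  split.
    apply: leq_trans (code_dist n h _ _ n0 (recip_nz n _ n0 HW0) HWq) _.
    apply: leq_trans (wtp_recip n _ n0) _.
    apply: leq_trans (wtpD n _ _) _; rewrite -xU -yV addnC leq_add2r; exact: Hpw.
  set W2 := W * i'.
  have HW2r : red n (f * recip n W2) = 0.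
    rewrite /W2 recipM // redMr mulrA (congrMr n (f * recip n W) _ pinv); last by rewrite recip_recip // red_red.
    by rewrite -redMl HWr mul0r red0.
  have HW20 : red n W2 != 0.
    apply: contraNneq HW0 => H; rewrite -(red_mul1 n W i' p' hpC') -/W2.
    by rewrite -redMl H mul0r red0.
  have HW2q := ann_h n f (recip n W2) fd f0 HW2r; rewrite -/h in HW2q.
  apply: leq_trans (code_dist n h _ _ n0 (recip_nz n _ n0 HW20) HW2q) _.
  apply: leq_trans (wtp_recip n _ n0) _.
  have -> : wtp n W2 = wtp n (U * i' + V).
    apply: wtp_eq; rewrite /W2 /W mulrDl redD (redD _ (U * i')).
    by rewrite red_mul1.
  apply: leq_trans (wtpD n _ _) _; rewrite -xU -yV leq_add2r; exact: Hiw.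
Qed.

Theorem theorem3 (n : nat) (f p pinv r s r' s' : {poly 'F_2}) :
  (0 < n)%N ->
  f %| 'X^n - 1 ->
  (1 < size f)%N ->
  coprimep p ('X^n - 1) ->
  red n (p * pinv) = 1 ->
  let h := ('X^n - 1) %/ f in
  red n (r + p * s) = red n h ->
  red n (r' + pinv * s') = red n h ->
  let d := mindist (cyclic_code n h) in
  let a := f in
  let b := p * f in
  let dGB := GB_dist n a b in
  let m := maxn (wtp n p) (wtp n pinv) in
  let lb (m' : nat) : rat :=
    Num.min (((wtp n p + wtp n pinv) * d)%:R / (m + wtp n p * wtp n pinv)%:R)
            (d%:R / m'%:R) in
  [/\ GB_dim n a b = (2 * (size f).-1)%N,
      lb (maxn (wtp n r) (wtp n s)) <= dGB%:R,
      lb (maxn (wtp n r') (wtp n s')) <= dGB%:R,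
      (dGB <= minn (wtp n p).+1 (minn (wtp n pinv).+1 (wtp n s + wtp n r)))%N &
      (exists2 w, w \in GB_C1 n a b :\: GB_C2 n a b & wt w = (wtp n p).+1) /\
      (exists2 w, w \in GB_C1 n a b :\: GB_C2 n a b & wt w = (wtp n s + wtp n r)%N)].
Proof.
move=> n0 fd sf _ hp h hr hr' d a b dGB m lb.
have f0 : f != 0 by apply: (contraTneq _ fd) => ->; rewrite dvd0p (negPf (Xn1_neq0 n n0)).
have E : h * f = 'X^n - 1 by rewrite divpK.
have h0 : h != 0.
  by apply: (contraTneq _ (Xn1_neq0 n n0)) => h0; rewrite -E h0 mul0r eqxx.
have Hs := size_h n f n0 fd; rewrite -/h in Hs.
have redh : red n h = h.
  apply: red_small => //; move: Hs sf; set u := size h; set v := size f.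
  by clearbody u v; lia.
set e1 := row_mx (pvec n 1) (pvec n p).
set e2 := row_mx (pvec n s) (pvec n r).
set e3 := row_mx (pvec n pinv) (pvec n 1).
have e1C : e1 \in GB_C1 n a b :\: GB_C2 n a b.
  rewrite inE inC1 // ?andbT; last by rewrite /a /b mul1r addpp red0.
  apply: notC2 => // c Hc _; exact: (red_ne1 n f c fd sf Hc).
have e2C : e2 \in GB_C1 n a b :\: GB_C2 n a b.
  rewrite inE inC1 // ?andbT; last first.
    rewrite /a /b.
    have -> : s * (p * f) + r * f = (r + p * s) * f by ring.
    by rewrite -redMl hr redMl E; apply/eqP; rewrite red_eq0.
  apply: notC2 => // c Hc1 Hc2.
  have : red n h = 0.
    rewrite -hr redD -Hc2 -(congrMr n p _ _ Hc1) /a /b.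
    by rewrite -redD (_ : c * (p * f) + p * (c * f) = 0) ?red0 // mulrCA addpp.
  by rewrite redh => /eqP; rewrite (negPf h0).
have e3C : e3 \in GB_C1 n a b :\: GB_C2 n a b.
  rewrite inE inC1 // ?andbT; last first.
    rewrite /a /b mulrA mul1r redD -redMl (mulrC pinv) hp mul1r -redD.
    by rewrite addpp red0.
  apply: notC2 => // c _ Hc; apply: (red_ne1 n f (c * p) fd sf).
  by rewrite -mulrA.
have e1w : wt e1 = (wtp n p).+1 by rewrite wt_rowp wtp1.
have e2w : wt e2 = (wtp n s + wtp n r)%N by rewrite wt_rowp.
have e3w : wt e3 = (wtp n pinv).+1 by rewrite wt_rowp wtp1 // addn1.
set S := (GB_C1 n a b :\: GB_C2 n a b) :|: (GB_C1' n a b :\: GB_C2' n a b).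
have inS w : w \in GB_C1 n a b :\: GB_C2 n a b -> w \in S by move=> H; rewrite inE H.
have key : forall w, w \in S ->
  (((wtp n p + wtp n pinv) * d)%:R / (m + wtp n p * wtp n pinv)%:R
     <= (wt (lsubmx w) + wt (rsubmx w))%:R :> rat) \/
  ((d <= (wt (lsubmx w) + wt (rsubmx w)) * maxn (wtp n r) (wtp n s))%N /\
   (d <= (wt (lsubmx w) + wt (rsubmx w)) * maxn (wtp n r') (wtp n s'))%N).
  move=> w; rewrite inE => /orP [] /setDP [H1 H2].
    have := X_lower n f p pinv r s r' s' w n0 fd sf hp hr hr' H1 H2.
    move=> /= [[A1 A2]|B]; [left | by right].
    exact: (ratA _ _ _ _ _ A1 A2).
  have := Z_lower n f p pinv r s r' s' w n0 fd sf hp hr hr' H1 H2.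
  move=> /= [[A1 A2]|B]; [left | by right].
  by rewrite [(wt (lsubmx w) + _)%N]addnC; exact: (ratA _ _ _ _ _ A1 A2).
have [w wS dw] := minwt_attained (n + n) S e1 (inS _ e1C).
have dGBw : dGB = (wt (lsubmx w) + wt (rsubmx w))%N.
  by rewrite /dGB /GB_dist -/S dw -{1}(hsubmxK w) wt_row_mx.
split.
- exact: GB_dim_eq.
- rewrite dGBw; case: (key w wS) => [A|[B1 B2]]; rewrite ge_min ?A //.
  by rewrite (ratB _ _ _ _ B1) orbT.
- rewrite dGBw; case: (key w wS) => [A|[B1 B2]]; rewrite ge_min ?A //.
  by rewrite (ratB _ _ _ _ B2) orbT.
- rewrite !leq_min -e1w -e2w -e3w /dGB /GB_dist -/S.
  by rewrite !minwt_le ?inS.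
- by split; [exists e1 | exists e2].
Qed.
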